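(* Let $(\Delta x,\Delta y)\in\mathbb{R}^2$, $(o_x,o_y)\in\mathbb{R}^2$, $(x_0,y_0,\theta_0)\in\mathbb{R}^3$ and $t_{\max}>0$. Consider the straight robot path $x(t)=x_0+t\cos\theta_0$, $y(t)=y_0+t\sin\theta_0$, $\theta(t)=\theta_0$ for $t\in[0,t_{\max}]$, and let the anchoring point have world coordinates $\tilde x(t)=x(t)+\cos\theta(t)\Delta x-\sin\theta(t)\Delta y$, $\tilde y(t)=y(t)+\sin\theta(t)\Delta x+\cos\theta(t)\Delta y$. Assume $(\tilde x(t),\tilde y(t))\neq(o_x,o_y)$ for all $t$. Then the relative angle function $$\Phi(t)=\arctan\left(\frac{o_y-\tilde y(t)}{o_x-\tilde x(t)}\right)-\theta(t)$$ is monotonic on $(0,t_{\max})$.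
   Context: $(\Delta x,\Delta y)$ is the position of the tether–robot anchoring point $s$ in the robot's egocentric frame, and $(o_x,o_y)$ is the (fixed) position of the last tether–obstacle contact point $o$ in the world frame. In the relative angle function, $\arctan\left(\frac{o_y-\tilde y}{o_x-\tilde x}\right)$ denotes the direction angle of the vector from $(\tilde x,\tilde y)$ to $(o_x,o_y)$, taken as a continuous (differentiable) branch along the path, whose derivative is $\frac{-\tilde y'(o_x-\tilde x)+\tilde x'(o_y-\tilde y)}{(o_x-\tilde x)^2+(o_y-\tilde y)^2}$. *)

(* Defs.v *)
From Stdlib Require Import Reals.
Open Scope R_scope.

Definition anchor_x (dx dy x0 th0 t : R) : R :=
  (x0 + t * cos th0) + cos th0 * dx - sin th0 * dy.
Definition anchor_y (dx dy y0 th0 t : R) : R :=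
  (y0 + t * sin th0) + sin th0 * dx + cos th0 * dy.

(* [a] is a direction angle of the (nonzero) vector (u, v), i.e. a value of
   "arctan(v/u)" in the sense of the angle of the vector (u,v). *)
Definition is_dir_angle (a u v : R) : Prop :=
  cos a * sqrt (u ^ 2 + v ^ 2) = u /\ sin a * sqrt (u ^ 2 + v ^ 2) = v.

Definition monotonic_on_open (f : R -> R) (a b : R) : Prop :=
  (forall s t, a < s -> s <= t -> t < b -> f s <= f t) \/
  (forall s t, a < s -> s <= t -> t < b -> f t <= f s).

(* Main.v *)
Require Import Defs.
From Stdlib Require Import Reals Lra.
Open Scope R_scope.

Lemma key (g : R -> R) (s t : R) :
  s < t -> g s = 0 ->
  (forall x, s <= x <= t -> continuity_pt g x) ->
  (forall x, s <= x <= t -> 0 <= sin (g x)) -> 0 <= g t.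
Proof.
  intros Hst Hs Hc Hsin.
  destruct (Rle_lt_dec 0 (g t)) as [|Hlt]; [assumption|exfalso].
  destruct (Rle_lt_dec (- (PI/2)) (g t)) as [Hge|Hlt2].
  - assert (sin (g t) < 0) by (apply sin_lt_0_var; pose proof PI_RGT_0; lra).
    specialize (Hsin t); lra.
  - destruct (Ranalysis5.IVT_interv (fun x => - (g x + PI/2)) s t) as [z [Hz Hgz]].
    + intros a Ha. apply continuity_pt_opp. apply continuity_pt_plus.
      now apply Hc. apply continuity_pt_const. intros ? ?; reflexivity.
    + exact Hst.
    + rewrite Hs. pose proof PI_RGT_0; lra.
    + lra.
    + assert (g z = - (PI/2)) by lra.
      specialize (Hsin z Hz). rewrite H, sin_neg, sin_PI2 in Hsin. lra.
Qed.

Lemma sqrt_pos_ne (u v : R) : (u, v) <> (0, 0) -> 0 < sqrt (u ^ 2 + v ^ 2).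
Proof.
  intro H. apply sqrt_lt_R0.
  destruct (Req_dec u 0) as [->|Hu].
  - destruct (Req_dec v 0) as [->|Hv]. contradiction.
    assert (0 < v^2) by (pose proof (Rsqr_pos_lt _ Hv) as Q; unfold Rsqr in Q; nra). nra.
  - assert (0 < u^2) by (pose proof (Rsqr_pos_lt _ Hu) as Q; unfold Rsqr in Q; nra). nra.
Qed.

Theorem theorem1 (dx dy ox oy x0 y0 th0 tmax : R) (alpha : R -> R) :
  0 < tmax ->
  (forall t, 0 <= t <= tmax ->
     (anchor_x dx dy x0 th0 t, anchor_y dx dy y0 th0 t) <> (ox, oy)) ->
  (* alpha is a continuous branch of the direction angle of the vector
     from the anchoring point to o along the path *)
  (forall t, 0 <= t <= tmax ->
     is_dir_angle (alpha t) (ox - anchor_x dx dy x0 th0 t)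
                            (oy - anchor_y dx dy y0 th0 t)) ->
  (forall t, 0 < t < tmax -> continuity_pt alpha t) ->
  monotonic_on_open (fun t => alpha t - th0) 0 tmax.
Proof.
  intros Htm Hne Hdir Hcont.
  set (K := cos th0 * (oy - anchor_y dx dy y0 th0 0) - sin th0 * (ox - anchor_x dx dy x0 th0 0)).
  set (r := fun t => sqrt ((ox - anchor_x dx dy x0 th0 t) ^ 2 + (oy - anchor_y dx dy y0 th0 t) ^ 2)).
  assert (Hr : forall t, 0 <= t <= tmax -> 0 < r t).
  { intros t Ht. apply sqrt_pos_ne. intro E. apply (Hne t Ht).
    injection E; intros E1 E2. f_equal; lra. }
  assert (Hsin : forall s t, 0 <= s <= tmax -> 0 <= t <= tmax ->
            sin (alpha t - alpha s) * (r s * r t) = (t - s) * K).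
  { intros s t Hs Ht. destruct (Hdir s Hs) as [Cs Ss]. destruct (Hdir t Ht) as [Ct St].
    fold (r s) in Cs, Ss. fold (r t) in Ct, St.
    rewrite sin_minus.
    transitivity ((sin (alpha t) * r t) * (cos (alpha s) * r s) - (cos (alpha t) * r t) * (sin (alpha s) * r s)).
    ring. rewrite Cs, Ss, Ct, St. unfold K, anchor_x, anchor_y. ring. }
  assert (Hmono : forall s t, 0 < s -> s < t -> t < tmax ->
            (forall x, s <= x <= t -> 0 <= sin (alpha x - alpha s)) -> alpha s <= alpha t).
  { intros s t H1 H2 H3 Hp.
    assert (0 <= alpha t - alpha s); [|lra].
    apply (key (fun x => alpha x - alpha s) s t H2); [ring| |exact Hp].
    intros x Hx. apply continuity_pt_minus. apply Hcont; lra.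
    apply continuity_pt_const. intros ? ?; reflexivity. }
  destruct (Rle_lt_dec 0 K) as [HK|HK].
  - left. intros s t H1 H2 H3. destruct (Req_dec s t) as [->|Hst]; [lra|].
    cut (alpha s <= alpha t); [lra|].
    apply Hmono; try lra. intros x Hx.
    pose proof (Hsin s x ltac:(lra) ltac:(lra)).
    pose proof (Hr s ltac:(lra)). pose proof (Hr x ltac:(lra)).
    assert (0 < r s * r x) by nra.
    assert (0 <= (x - s) * K) by nra. nra.
  - right. intros s t H1 H2 H3. destruct (Req_dec s t) as [->|Hst]; [lra|].
    cut (0 <= alpha s - alpha t); [lra|].
    apply (key (fun x => alpha s - alpha x) s t); [lra|ring| |].
    + intros x Hx. apply continuity_pt_minus. apply continuity_pt_const. intros ? ?; reflexivity.
      apply Hcont; lra.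
    + intros x Hx. simpl.
      pose proof (Hsin s x ltac:(lra) ltac:(lra)).
      pose proof (Hr s ltac:(lra)). pose proof (Hr x ltac:(lra)).
      assert (0 < r s * r x) by nra.
      assert ((x - s) * K <= 0) by nra.
      replace (alpha s - alpha x) with (- (alpha x - alpha s)) by ring.
      rewrite sin_neg. nra.
Qed.
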